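(* Let $(U,\Phi)$ be a two-phase quantum walk with one defect with an initial state $\Phi\in\mathcal H_0$. Then $(U,\Phi)$ is unitary equivalent to $(U_{r,\mu},\Phi_{\alpha,\theta})$ for some $0\le r_\varepsilon,\alpha\le1$ ($\varepsilon=+,-,0$) and $\mu_i,\theta\in\mathbb R$ ($i=1,2,3$), where $\Phi_{\alpha,\theta}=\alpha e_1^0+e^{i\theta}\sqrt{1-\alpha^2}\,e_2^0$ and \begin{align*} U_{r,\mu}={}&|e_1^{-1}\rangle\langle r_0e_1^0+e^{i\mu_1}s_0e_2^0|+|e_2^{1}\rangle\langle -e^{i\mu_2}s_0e_1^0+e^{i(\mu_1+\mu_2)}r_0e_2^0|\\ &+\sum_{n\ge1}|e_1^{n-1}\rangle\langle r_+e_1^n+s_+e_2^n|+|e_2^{n+1}\rangle\langle -e^{i\mu_3}s_+e_1^n+e^{i\mu_3}r_+e_2^n|\\ &+\sum_{n\le-1}|e_1^{n-1}\rangle\langle r_-e_1^n+s_-e_2^n|+|e_2^{n+1}\rangle\langle -s_-e_1^n+r_-e_2^n|, \end{align*} with $s_\varepsilon=\sqrt{1-r_\varepsilon^2}$, $r=(r_+,r_-,r_0)$, $\mu=(\mu_1,\mu_2,\mu_3)$. Moreover, for $0<r_\varepsilon,r'_\varepsilon,\alpha,\alpha'<1$ and $\mu_i,\mu'_i,\theta,\theta'\in[0,2\pi)$, the pairs $(U_{r,\mu},\Phi_{\alpha,\theta})$ and $(U_{r',\mu'},\Phi_{\alpha',\theta'})$ are unitary equivalent if and only if $r=r'$, $\mu=\mu'$,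 $\alpha=\alpha'$ and $\theta=\theta'$.
   Context: Let $\mathcal H_n=\mathbb C^2$ for $n\in\mathbb Z$, $\mathcal H=\bigoplus_{n\in\mathbb Z}\mathcal H_n$, $P_n$ the orthogonal projection onto $\mathcal H_n$, and $\{e_1^n,e_2^n\}$ the standard basis of $\mathcal H_n$; each $\mathcal H_n$ is identified with $\mathbb C^2$. Dirac notation: $|x\rangle\langle y|$ is the operator $z\mapsto\langle y,z\rangle x$ (inner product conjugate-linear in the first argument). A one-dimensional quantum walk is a unitary $U$ on $\mathcal H$ with $\operatorname{rank}(P_nUP_m)=1$ if $m=n\pm1$ and $0$ otherwise. Every such $U$ can be written as $U=\sum_{n\in\mathbb Z}|\xi_{n-1,n}\rangle\langle\zeta_{n-1,n}|+|\xi_{n+1,n}\rangle\langle\zeta_{n+1,n}|$, where $\{\xi_{n,n+1},\xi_{n+1,n}\}_{n}$ and $\{\zeta_{n,n+1},\zeta_{n+1,n}\}_{n}$ are orthonormal bases of $\mathcal H$ with $\xi_{n,n+1},\zeta_{n+1,n}\in\mathcal H_n$ and $\xi_{n+1,n},\zeta_{n,n+1}\in\mathcal H_{n+1}$. $U$ is a two-phase quantum walk with one defect if it has such a representation for which there exist $\xi_1^\pm,\xi_2^\pm,\zeta_1^\pm,\zeta_2^\pm\in\mathbb C^2$ with $\xi_{n,n+1}=\xi_1^+$, $\xi_{n,n-1}=\xi_2^+$, $\zeta_{n-1,n}=\zeta_1^+$, $\zeta_{n+1,n}=\zeta_2^+$ for all $n\ge1$, and the same with superscript $-$ for all $n\le-1$.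 An initial state is a unit vector $\Phi\in\mathcal H_0$. Since a walk $U$ is identified with $e^{i\lambda}U$ and a state $\Phi$ with $e^{i\lambda}\Phi$ ($\lambda\in\mathbb R$), pairs $(U,\Phi)$ and $(U',\Phi')$ are called unitary equivalent if there exist $\lambda,\lambda'\in\mathbb R$ and a unitary $W=\bigoplus_nW_n$ ($W_n$ unitary on $\mathcal H_n$) with $e^{i\lambda}WUW^*=U'$ and $e^{i\lambda'}W\Phi=\Phi'$. *)

(* Defs.v *)
From HB Require Import structures.
From Stdlib Require Import Reals.
From mathcomp Require Import all_boot all_order all_algebra.
From mathcomp Require Import Rstruct.
From mathcomp Require Import complex.
Set Implicit Arguments. Unset Strict Implicit. Unset Printing Implicit Defensive.
Import Order.TTheory GRing.Theory Num.Theory.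
Local Open Scope ring_scope.
Local Open Scope complex_scope.

Definition Cx := (R : Type)[i].

Definition expi (t : R) : Cx := (cos t) +i* (sin t).

Definition adj m n (A : 'M[Cx]_(m, n)) : 'M[Cx]_(n, m) := map_mx (@conjc _) A^T.

(* vectors of H_n = Cx^2 are column vectors; standard basis e_1, e_2 *)
Definition e1 : 'cV[Cx]_2 := \col_i (if i == 0 then 1 else 0).
Definition e2 : 'cV[Cx]_2 := \col_i (if i == 0 then 0 else 1).

(* Dirac ket-bra |x><y| : z |-> <y,z> x, as a 2x2 matrix *)
Definition ketbra (x y : 'cV[Cx]_2) : 'M[Cx]_2 := x *m adj y.

(* A (banded) operator on H = (+)_{n in Z} Cx^2 is given by its blocks:
   B n m = P_n U P_m, viewed as a 2x2 matrix H_m -> H_n. *)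
Definition blockop := int -> int -> 'M[Cx]_2.

(* Because every block row/column has at most
   two nonzero blocks, U U^* = 1 and U^* U = 1 reduce to finite block sums. *)
Definition quantum_walk (U : blockop) : Prop :=
  (forall n m : int,
      \rank (U n m) = (if (m == n + 1) || (m == n - 1) then 1%N else 0%N)) /\
  (forall n k : int,
      \sum_(m <- [:: n - 1; n + 1]) U n m *m adj (U k m)
        = (if n == k then 1%:M else 0)) /\
  (forall m l : int,
      \sum_(n <- [:: m - 1; m + 1]) adj (U n m) *m U n l
        = (if m == l then 1%:M else 0)).

Definition onb2 (u v : 'cV[Cx]_2) : Prop :=
  adj u *m u = 1%:M /\ adj v *m v = 1%:M /\ adj u *m v = 0.

(* With
     xr n = xi_{n,n+1}, xl n = xi_{n,n-1}   (in H_n)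
     zl n = zeta_{n-1,n}, zr n = zeta_{n+1,n} (in H_n)
   U = sum_n |xi_{n-1,n}><zeta_{n-1,n}| + |xi_{n+1,n}><zeta_{n+1,n}|,
   i.e. P_n U P_{n+1} = |xr n><zl (n+1)| and P_n U P_{n-1} = |xl n><zr (n-1)|. *)
Definition two_phase_one_defect (U : blockop) : Prop :=
  quantum_walk U /\
  exists xr xl zl zr : int -> 'cV[Cx]_2,
    (forall n, onb2 (xr n) (xl n)) /\ (forall n, onb2 (zl n) (zr n)) /\
    (forall n m : int, U n m =
        if m == n + 1 then ketbra (xr n) (zl m)
        else if m == n - 1 then ketbra (xl n) (zr m)
        else 0) /\
    (exists xi1p xi2p zeta1p zeta2p : 'cV[Cx]_2,
      forall n : int, 1 <= n ->
        [/\ xr n = xi1p, xl n = xi2p, zl n = zeta1p & zr n = zeta2p]) /\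
    (exists xi1m xi2m zeta1m zeta2m : 'cV[Cx]_2,
      forall n : int, n <= -1 ->
        [/\ xr n = xi1m, xl n = xi2m, zl n = zeta1m & zr n = zeta2m]).

Definition unit_state (Phi : 'cV[Cx]_2) : Prop := adj Phi *m Phi = 1%:M.

Definition unitary2 (W : 'M[Cx]_2) : Prop :=
  W *m adj W = 1%:M /\ adj W *m W = 1%:M.

Definition unitary_equiv (U : blockop) (Phi : 'cV[Cx]_2)
    (U' : blockop) (Phi' : 'cV[Cx]_2) : Prop :=
  exists (lam lam' : R) (W : int -> 'M[Cx]_2),
    (forall n, unitary2 (W n)) /\
    (forall n m : int, expi lam *: (W n *m U n m *m adj (W m)) = U' n m) /\
    expi lam' *: (W 0 *m Phi) = Phi'.

Definition sq (r : R) : Cx := (Num.sqrt (1 - r ^+ 2))%:C.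

Definition Phi_at (alpha theta : R) : 'cV[Cx]_2 :=
  alpha%:C *: e1 + (expi theta * sq alpha) *: e2.

(* the bra vector (in H_m) of the block P_{m-1} U P_m of U_{r,mu} *)
Definition zeta_left (rp rm r0 mu1 : R) (m : int) : 'cV[Cx]_2 :=
  if 1 <= m then rp%:C *: e1 + sq rp *: e2
  else if m == 0 then r0%:C *: e1 + (expi mu1 * sq r0) *: e2
  else rm%:C *: e1 + sq rm *: e2.

(* the bra vector (in H_m) of the block P_{m+1} U P_m of U_{r,mu} *)
Definition zeta_right (rp rm r0 mu1 mu2 mu3 : R) (m : int) : 'cV[Cx]_2 :=
  if 1 <= m then (- (expi mu3 * sq rp)) *: e1 + (expi mu3 * rp%:C) *: e2
  else if m == 0 then (- (expi mu2 * sq r0)) *: e1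
                      + (expi (mu1 + mu2) * r0%:C) *: e2
  else (- sq rm) *: e1 + rm%:C *: e2.

(* U_{r,mu} with r = (rp, rm, r0) = (r_+, r_-, r_0), mu = (mu1, mu2, mu3):
   P_{n} U P_{n+1} = |e_1><zeta_left (n+1)|, P_n U P_{n-1} = |e_2><zeta_right (n-1)| *)
Definition U_std (rp rm r0 mu1 mu2 mu3 : R) : blockop :=
  fun n m =>
    if m == n + 1 then ketbra e1 (zeta_left rp rm r0 mu1 m)
    else if m == n - 1 then ketbra e2 (zeta_right rp rm r0 mu1 mu2 mu3 m)
    else 0.

(* Main.v *)
Require Import Defs.
From HB Require Import structures.
From Stdlib Require Import Reals.
From mathcomp Require Import all_boot all_order all_algebra.
From mathcomp Require Import Rstruct.
From mathcomp Require Import complex.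
From Stdlib Require Import Lra.
From mathcomp Require Import ring lra zify.
Import Order.TTheory GRing.Theory Num.Theory.
Local Open Scope ring_scope.

Local Open Scope complex_scope.

Lemma expiD a b : expi (a + b) = expi a * expi b.
Proof.
rewrite /expi; simpc. rewrite cosD sinD. apply/eqP; rewrite eq_complex /=; apply/andP; split; apply/eqP; ring.
Qed.
Lemma cs1 a : cos a ^+ 2 + sin a ^+ 2 = 1.
Proof. have H := sin2_cos2 a. rewrite /Rsqr in H. apply: etrans _ H. rewrite RplusE !RmultE; ring. Qed.
Lemma expi0 : expi 0 = 1.
Proof. by rewrite /expi cos_0 sin_0. Qed.
Lemma expiN a : expi (- a) = conjc (expi a).
Proof. by rewrite /expi cos_neg sin_neg. Qed.
Lemma expiJ a : expi a * conjc (expi a) = 1.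
Proof. rewrite -expiN -expiD RplusE RoppE addrN expi0 //. Qed.
Lemma expi_neq0 a : expi a != 0.
Proof. apply/negP=> /eqP H. have := expiJ a. rewrite H mul0r => /eqP. by rewrite eq_sym oner_eq0. Qed.
Lemma expiV a : conjc (expi a) = (expi a)^-1.
Proof. apply: (mulfI (expi_neq0 a)). by rewrite expiJ divff // expi_neq0. Qed.
Lemma conjC (r : R) : conjc (r%:C) = r%:C. Proof. exact: conjc_real. Qed.

Definition mx2 (a b c d : Cx) : 'M[Cx]_2 :=
  \matrix_(i, j) if i == 0 then (if j == 0 then a else b) else (if j == 0 then c else d).
Definition col2 (a b : Cx) : 'cV[Cx]_2 := \col_i (if i == 0 then a else b).

Lemma ord2_cases (i : 'I_2) : i = 0 \/ i = 1.
Proof. case: i => [[|[|k]] Hk]; [left|right|by []]; exact: val_inj. Qed.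

Lemma mx2E (A : 'M[Cx]_2) : A = mx2 (A 0 0) (A 0 1) (A 1 0) (A 1 1).
Proof.
apply/matrixP=> i j; rewrite !mxE.
by case: (ord2_cases i) => ->; case: (ord2_cases j) => ->.
Qed.
Lemma col2E (v : 'cV[Cx]_2) : v = col2 (v 0 0) (v 1 0).
Proof.
apply/matrixP=> i j; rewrite !mxE.
have -> : j = 0 by apply: val_inj; case: j => [[|]].
by case: (ord2_cases i) => ->.
Qed.
Lemma mx2_inj a b c d a' b' c' d' :
  mx2 a b c d = mx2 a' b' c' d' -> [/\ a = a', b = b', c = c' & d = d'].
Proof.
move=> H. have h := congr1 (fun M : 'M[Cx]_2 => (M 0 0, M 0 1, M 1 0, M 1 1)) H.
by move: h; rewrite /= !mxE /= => -[].
Qed.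
Lemma col2_inj a b a' b' : col2 a b = col2 a' b' -> a = a' /\ b = b'.
Proof.
move=> H. have h := congr1 (fun M : 'cV[Cx]_2 => (M 0 0, M 1 0)) H.
by move: h; rewrite /= !mxE /= => -[].
Qed.

Lemma sum2 (F : 'I_2 -> Cx) : \sum_(k < 2) F k = F 0 + F 1.
Proof. rewrite big_ord_recl big_ord1; congr (_ + F _); exact: val_inj. Qed.

Lemma mx2M a b c d a' b' c' d' :
  mx2 a b c d *m mx2 a' b' c' d' =
  mx2 (a * a' + b * c') (a * b' + b * d') (c * a' + d * c') (c * b' + d * d').
Proof.
apply/matrixP=> i j; rewrite !mxE sum2 !mxE.
by case: (ord2_cases i) => ->; case: (ord2_cases j) => ->.
Qed.
Lemma mx2col2 a b c d x y :
  mx2 a b c d *m col2 x y = col2 (a * x + b * y) (c * x + d * y).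
Proof.
apply/matrixP=> i j; rewrite !mxE sum2 !mxE.
by case: (ord2_cases i) => ->.
Qed.
Lemma adj_mx2 a b c d : adj (mx2 a b c d) = mx2 (conjc a) (conjc c) (conjc b) (conjc d).
Proof.
apply/matrixP=> i j; rewrite !mxE.
by case: (ord2_cases i) => ->; case: (ord2_cases j) => ->.
Qed.
Lemma ketbra2 a b c d : ketbra (col2 a b) (col2 c d) =
  mx2 (a * conjc c) (a * conjc d) (b * conjc c) (b * conjc d).
Proof.
apply/matrixP=> i j; rewrite !mxE big_ord1 !mxE.
by case: (ord2_cases i) => ->; case: (ord2_cases j) => ->.
Qed.
Lemma mx2_1 : (1%:M : 'M[Cx]_2) = mx2 1 0 0 1.
Proof.
apply/matrixP=> i j; rewrite !mxE.
by case: (ord2_cases i) => ->; case: (ord2_cases j) => ->.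
Qed.
Lemma scale_mx2 k a b c d : k *: mx2 a b c d = mx2 (k * a) (k * b) (k * c) (k * d).
Proof.
apply/matrixP=> i j; rewrite !mxE.
by case: (ord2_cases i) => ->; case: (ord2_cases j) => ->.
Qed.
Lemma scale_col2 k a b : k *: col2 a b = col2 (k * a) (k * b).
Proof. apply/matrixP=> i j; rewrite !mxE. by case: (ord2_cases i) => ->. Qed.
Lemma add_col2 a b c d : col2 a b + col2 c d = col2 (a + c) (b + d).
Proof. apply/matrixP=> i j; rewrite !mxE. by case: (ord2_cases i) => ->. Qed.
Lemma e1E : e1 = col2 1 0. Proof. by apply/matrixP=> i j; rewrite !mxE. Qed.
Lemma e2E : e2 = col2 0 1. Proof. by apply/matrixP=> i j; rewrite !mxE. Qed.
Lemma mx2_0 : (0 : 'M[Cx]_2) = mx2 0 0 0 0.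
Proof.
apply/matrixP=> i j; rewrite !mxE.
by case: (ord2_cases i) => ->; case: (ord2_cases j) => ->.
Qed.
Definition ip (u v : 'cV[Cx]_2) := conjc (u 0 0) * v 0 0 + conjc (u 1 0) * v 1 0.
Lemma adj_col2M (u v : 'cV[Cx]_2) : adj u *m v = (ip u v)%:M.
Proof.
apply/matrixP=> i j; rewrite !mxE sum2 !mxE.
have -> : i = 0 by apply: val_inj; case: i => [[|]].
have -> : j = 0 by apply: val_inj; case: j => [[|]].
by rewrite /ip mulr1n.
Qed.
Lemma scal1_inj (a b : Cx) : (a%:M : 'M[Cx]_1) = b%:M -> a = b.
Proof. move=> H. have := congr1 (fun M : 'M[Cx]_1 => M 0 0) H. by rewrite !mxE. Qed.
Lemma ipE (u v : 'cV[Cx]_2) (k : Cx) : adj u *m v = k%:M -> ip u v = k.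
Proof. rewrite adj_col2M. exact: scal1_inj. Qed.
Lemma ipE0 (u v : 'cV[Cx]_2) : adj u *m v = 0 -> ip u v = 0.
Proof. rewrite adj_col2M => /(congr1 (fun M : 'M[Cx]_1 => M 0 0)). by rewrite !mxE /= mulr1n. Qed.
Lemma onb2E u v : onb2 u v -> [/\ ip u u = 1, ip v v = 1 & ip u v = 0].
Proof. case=> [h1 [h2 h3]]. by split; [apply: ipE|apply: ipE|apply: ipE0]. Qed.
Lemma ipC u v : ip v u = conjc (ip u v).
Proof. rewrite /ip rmorphD !rmorphM /= !conjcK. ring. Qed.

Definition Xm (x1 x2 : 'cV[Cx]_2) := mx2 (x1 0 0) (x2 0 0) (x1 1 0) (x2 1 0).
Lemma adjXX x1 x2 : adj (Xm x1 x2) *m Xm x1 x2 = mx2 (ip x1 x1) (ip x1 x2) (ip x2 x1) (ip x2 x2).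
Proof. by rewrite /Xm adj_mx2 mx2M /ip. Qed.

Lemma parseval x1 x2 u v : onb2 x1 x2 ->
  ip u v = conjc (ip x1 u) * ip x1 v + conjc (ip x2 u) * ip x2 v.
Proof.
move=> /onb2E [h11 h22 h12].
have h21 : ip x2 x1 = 0 by rewrite ipC h12 conjc0.
have H : adj (Xm x1 x2) *m Xm x1 x2 = 1%:M by rewrite adjXX h11 h22 h12 h21 mx2_1.
move/mulmx1C: H. rewrite /Xm adj_mx2 mx2M mx2_1 => /mx2_inj [E00 E01 E10 E11].
rewrite /ip !rmorphD !rmorphM /= !conjcK.
apply/eqP; rewrite -subr_eq0; apply/eqP.
set a0 := x1 0 0 in E00 E01 E10 E11 *; set a1 := x1 1 0 in E00 E01 E10 E11 *.
set b0 := x2 0 0 in E00 E01 E10 E11 *; set b1 := x2 1 0 in E00 E01 E10 E11 *.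
transitivity (conjc (u 0 0) * v 0 0 * (1 - (a0 * conjc a0 + b0 * conjc b0))
  - conjc (u 0 0) * v 1 0 * (a0 * conjc a1 + b0 * conjc b1)
  - conjc (u 1 0) * v 0 0 * (a1 * conjc a0 + b1 * conjc b0)
  + conjc (u 1 0) * v 1 0 * (1 - (a1 * conjc a1 + b1 * conjc b1))).
  ring.
rewrite E00 E01 E10 E11. ring.
Qed.

Definition nr (z : Cx) : R := Num.sqrt (complex.Re z ^+ 2 + complex.Im z ^+ 2).
Lemma nr_ge0 z : 0 <= nr z. Proof. exact: sqrtr_ge0. Qed.
Lemma polar (z : Cx) : exists t : R, z = (nr z)%:C * expi t.
Proof.
case: z => x y. rewrite /nr /=.
set n := Num.sqrt _.
have n2 : n ^+ 2 = x ^+ 2 + y ^+ 2 by rewrite sqr_sqrtr // addr_ge0 // sqr_ge0.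
have n0 : 0 <= n by exact: sqrtr_ge0.
have [n00|nz] := eqVneq n 0.
  exists 0. have : x ^+ 2 + y ^+ 2 = 0 by by rewrite -n2 n00 expr0n.
  move=> /eqP; rewrite paddr_eq0 ?sqr_ge0 // !sqrf_eq0 => /andP[/eqP-> /eqP->].
  by rewrite n00 mul0r.
have np : 0 < n by rewrite lt_def nz.
clearbody n.
set c := x / n.
have cb : -1 <= c <= 1.
  have : c ^+ 2 <= 1.
    rewrite /c expr_div_n ler_pdivrMr ?exprn_gt0 // mul1r n2 lerDl sqr_ge0 //.
  move=> h; apply/andP; split; nra.
have cb' : Rle (-1) c /\ Rle c 1.
  case/andP: cb => /RleP h1 /RleP h2; split; [exact: h1| exact: h2].
have hs : sqrt (1 - c²) = `|y| / n.
  rewrite RsqrtE /Rsqr RminusE RmultE.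
  have -> : (1 - c * c) = (`|y| / n) ^+ 2.
    rewrite expr_div_n real_normK ?num_real //.
    apply: (mulIf (expf_neq0 2 nz)). rewrite /c mulrBl mul1r divfK ?expf_neq0 //.
    rewrite /c. have -> : y ^+ 2 = n ^+ 2 - x ^+ 2 by rewrite n2; ring.
    by field.
  by rewrite sqrtr_sqr ger0_norm // divr_ge0.
have [y0|y0] := leP 0 y.
  exists (acos c). rewrite /expi cos_acos // sin_acos // hs ger0_norm //.
  simpc. rewrite /c. congr (_ +i* _); field; done.
exists (- acos c). rewrite /expi cos_neg sin_neg cos_acos // sin_acos // hs ltr0_norm //.
simpc. rewrite /c. congr (_ +i* _); field; done.
Qed.

Lemma zJ z : z * conjc z = ((nr z) ^+ 2)%:C.
Proof.
case: z => x y. rewrite /nr /= sqr_sqrtr ?addr_ge0 ?sqr_ge0 //.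
simpc. congr (_ +i* _); ring.
Qed.
Lemma realC_inj (x y : R) : x%:C = y%:C :> Cx -> x = y.
Proof. by case. Qed.
Lemma unit_expi d : d * conjc d = 1 -> exists t, d = expi t.
Proof.
move=> h. have [t ht] := polar d. exists t.
have : nr d ^+ 2 = 1 by apply: realC_inj; rewrite -zJ h.
move=> h2. have h3 : nr d = 1.
  have := nr_ge0 d. move: h2; set r := nr d => h2 h0. nra.
by rewrite ht h3 mul1r.
Qed.
Lemma conj_rexpi (r t : R) : conjc (r%:C * expi t) = r%:C * expi (- t).
Proof. rewrite /expi cos_neg sin_neg. simpc. congr (_ +i* _); rewrite ?RoppE; ring. Qed.
Lemma lin0 (x y : Cx) : x - y = 0 -> x = y.
Proof. by move/eqP; rewrite subr_eq0 => /eqP. Qed.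

Lemma param x1 x2 z1 z2 : onb2 x1 x2 -> onb2 z1 z2 ->
  exists ra rb ta tb td : R,
  [/\ 0 <= ra, 0 <= rb, ra ^+ 2 + rb ^+ 2 = 1,
      ip x1 z1 = ra%:C * expi ta /\ ip x2 z1 = rb%:C * expi tb &
      ip x1 z2 = - (expi td * rb%:C * expi (- tb)) /\
      ip x2 z2 = expi td * ra%:C * expi (- ta)].
Proof.
move=> hx hz.
have /onb2E [x11 x22 x12] := hx. have /onb2E [z11 z22 z12] := hz.
have x21 : ip x2 x1 = 0 by rewrite ipC x12 conjc0.
have h1 := parseval x1 x2 z1 z1 hx. rewrite z11 in h1.
have h2 := parseval x1 x2 z1 z2 hx. rewrite z12 in h2.
have h3 := parseval x1 x2 z2 z2 hx. rewrite z22 in h3.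
have h5 := parseval z1 z2 x2 x2 hz. rewrite x22 (ipC x2 z1) (ipC x2 z2) !conjcK in h5.
have h4 := parseval z1 z2 x2 x1 hz. rewrite x21 (ipC x2 z1) (ipC x2 z2) (ipC x1 z1) (ipC x1 z2) !conjcK in h4.
move: h1 h2 h3 h4 h5.
set a := ip x1 z1; set b := ip x2 z1; set c := ip x1 z2; set e := ip x2 z2.
move=> h1 h2 h3 h4 h5.
have h4' : a * conjc b + c * conjc e = 0.
  have := congr1 (@conjc _) h4. rewrite conjc0 rmorphD !rmorphM /= !conjcK => ->. ring.
have [d [Ee Ec]] : exists d, e = d * conjc a /\ c = - (d * conjc b).
  exists (a * e - c * b); split.
    apply/esym/lin0. transitivity (e * (conjc a * a + conjc b * b - 1) - b * (conjc a * c + conjc b * e)).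
      ring.
    rewrite -h1 -h2. ring.
  apply/esym/lin0. transitivity (- e * (a * conjc b + c * conjc e) + c * (conjc e * e + conjc b * b - 1)).
    ring.
  rewrite h4'. have -> : conjc e * e + conjc b * b - 1 = 0.
    rewrite h5; ring.
  ring.
have hd : d * conjc d = 1.
  rewrite h3 Ee Ec !rmorphN !rmorphM /= !conjcK.
  transitivity (d * conjc d * (conjc a * a + conjc b * b)); first by rewrite -h1 mulr1.
  ring.
have [td htd] := unit_expi _ hd.
have [ta hta] := polar a. have [tb htb] := polar b.
have ra0 := nr_ge0 a. have rb0 := nr_ge0 b.
have hr : nr a ^+ 2 + nr b ^+ 2 = 1.
  apply: realC_inj. rewrite rmorphD rmorph1 /= -!zJ h1. ring.
move: (nr a) (nr b) hta htb ra0 rb0 hr => ra rb hta htb ra0 rb0 hr.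
exists ra, rb, ta, tb, td; split => //; split.
  + by rewrite Ec htd htb conj_rexpi mulrA.
  + by rewrite Ee htd hta conj_rexpi mulrA.
Qed.
Lemma col2_congr (a b c d : Cx) : a = c -> b = d -> col2 a b = col2 c d.
Proof. by move=> -> ->. Qed.
Lemma mx2_congr (a b c d a' b' c' d' : Cx) : a = a' -> b = b' -> c = c' -> d = d' ->
  mx2 a b c d = mx2 a' b' c' d'.
Proof. by move=> -> -> -> ->. Qed.

Lemma adjM m n p (A : 'M[Cx]_(m, n)) (B : 'M[Cx]_(n, p)) : adj (A *m B) = adj B *m adj A.
Proof. by rewrite /adj trmx_mul map_mxM. Qed.
Lemma Wket (A B : 'M[Cx]_2) x z : A *m ketbra x z *m adj B = ketbra (A *m x) (B *m z).
Proof. by rewrite /ketbra adjM !mulmxA. Qed.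

Definition reg {T} (n : int) (vp v0 vm : T) : T :=
  if 1 <= n then vp else if n == 0 then v0 else vm.

Lemma reg_pos {T} n (a b c : T) : 1 <= n -> reg n a b c = a.
Proof. by rewrite /reg => ->. Qed.
Lemma reg_0 {T} (a b c : T) : reg 0 a b c = b.
Proof. by []. Qed.
Lemma reg_neg {T} n (a b c : T) : n <= -1 -> reg n a b c = c.
Proof. move=> h. rewrite /reg. have -> : (1 <= n) = false by lia. have -> : (n == 0) = false by lia. done. Qed.
Ltac efield := rewrite ?expiN ?conjcK ?expiV; field; rewrite ?expi_neq0 //.
Lemma expiB a b : expi (a - b) = expi a * conjc (expi b).
Proof. by rewrite expiD expiN. Qed.
Lemma expiM2 a : expi (a / 2%:R) * expi (a / 2%:R) = expi a.
Proof. rewrite -expiD. congr expi. rewrite RplusE ?RdivE. by field. Qed.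
Lemma conjM (x y : Cx) : conjc (x * y) = conjc x * conjc y.
Proof. exact: rmorphM. Qed.
Lemma conjN (x : Cx) : conjc (- x) = - conjc x.
Proof. exact: rmorphN. Qed.
Lemma sqE (r : R) : 0 <= r <= 1 -> sq r = (Num.sqrt (1 - r ^+ 2))%:C.
Proof. by []. Qed.
Lemma sq_eq ra rb : 0 <= rb -> ra ^+ 2 + rb ^+ 2 = 1 -> sq ra = rb%:C.
Proof.
move=> h0 h. rewrite /sq. congr (_%:C). have -> : 1 - ra ^+ 2 = rb ^+ 2 by rewrite -h; ring.
by rewrite sqrtr_sqr ger0_norm.
Qed.

Lemma int_cases (n : int) : [\/ 1 <= n, n = 0 | n <= -1].
Proof. have [h|h] := leP 1 n; first by constructor 1. have [->|h0] := eqVneq n 0; first by constructor 2. constructor 3. lia. Qed.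

Lemma existence (U : blockop) (Phi : 'cV[Cx]_2) :
  two_phase_one_defect U -> unit_state Phi ->
  exists (rp rm r0 alpha mu1 mu2 mu3 theta : R),
    [/\ 0 <= rp <= 1, 0 <= rm <= 1, 0 <= r0 <= 1, 0 <= alpha <= 1 &
        unitary_equiv U Phi (U_std rp rm r0 mu1 mu2 mu3) (Phi_at alpha theta)].
Proof.
case=> _ [xr [xl [zl [zr [hx [hz [HU [[x1p [x2p [z1p [z2p Hp]]]] [x1m [x2m [z1m [z2m Hm]]]]]]]]]]]].
have Hreg : forall n, let f := fun k => (ip (xr k) (zl k), ip (xl k) (zl k), ip (xr k) (zr k), ip (xl k) (zr k)) in
   f n = reg n (f 1) (f 0) (f (-1)).
  move=> n f. rewrite /reg. case: (int_cases n) => h.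
  - rewrite h /f. have [-> -> -> ->] := Hp n h. by have [-> -> -> ->] := Hp 1 (lexx _).
  - by rewrite h.
  - have -> : (1 <= n) = false by lia. have -> : (n == 0) = false by lia.
    rewrite /f. have [-> -> -> ->] := Hm n h. by have [-> -> -> ->] := Hm (-1) (lexx _).
have [rap [rbp [tap [tbp [tdp [rap0 rbp0 hrp [Hap Hbp] [Hcp Hep]]]]]]] := @param _ _ _ _ (hx 1) (hz 1).
have [ra0 [rb0 [ta0 [tb0 [td0 [ra00 rb00 hr0 [Ha0 Hb0] [Hc0 He0]]]]]]] := @param _ _ _ _ (hx 0) (hz 0).
have [ram [rbm [tam [tbm [tdm [ram0 rbm0 hrm [Ham Hbm] [Hcm Hem]]]]]]] := @param _ _ _ _ (hx (-1)) (hz (-1)).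
pose ra n := reg n rap ra0 ram. pose rb n := reg n rbp rb0 rbm.
pose ta n := reg n tap ta0 tam. pose tb n := reg n tbp tb0 tbm. pose td n := reg n tdp td0 tdm.
have Hip : forall n, [/\ ip (xr n) (zl n) = (ra n)%:C * expi (ta n),
     ip (xl n) (zl n) = (rb n)%:C * expi (tb n),
     ip (xr n) (zr n) = - (expi (td n) * (rb n)%:C * expi (- tb n)) &
     ip (xl n) (zr n) = expi (td n) * (ra n)%:C * expi (- ta n)].
  move=> n. have := Hreg n. rewrite /= /ra /rb /ta /tb /td /reg.
  case: ifP => _; first by case=> -> -> -> ->.
  case: ifP => _; by case=> -> -> -> ->.
pose lam := tdm / 2%:R.
pose P := fun n : int => match n with Posz k => k%:R * (lam - tap) | Negz k => - (lam - ta0) - k%:R * (lam - tam) end.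
have Pkey : forall n, P n = P (n - 1) + (lam - ta n).
  case=> [[|k]|k].
  - rewrite /P /ta /reg /= subnn. ring.
  - have -> : Posz k.+1 - 1 = Posz k by lia.
    rewrite /P /ta /reg /= -addn1 natrD. ring.
  - have -> : Negz k - 1 = Negz k.+1 by lia.
    rewrite /P /ta /reg /=.
    rewrite -addn1 natrD. ring.
have PkeyE : forall n, expi (P n) = expi (P (n - 1)) * expi lam * conjc (expi (ta n)).
  move=> n. by rewrite Pkey expiD expiB mulrA.
pose tbb := fun n : int => if n == 0 then tbm else tb n.
pose Q := fun n : int => lam + P (n - 1) - tbb n.
have QE : forall n, expi (Q n) = expi lam * expi (P (n - 1)) * conjc (expi (tbb n)).
  move=> n. by rewrite /Q expiB expiD.
have QE' : forall n, expi (Q n) = expi (P n) * expi (ta n) * conjc (expi (tbb n)).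
  move=> n. rewrite /Q -expiD -expiB. congr expi. rewrite [P n]Pkey ?RplusE ?RminusE. ring.
pose W := fun n : int => mx2 (expi (P n) * conjc (xr n 0 0)) (expi (P n) * conjc (xr n 1 0))
   (expi (Q n) * conjc (xl n 0 0)) (expi (Q n) * conjc (xl n 1 0)).
have Wv : forall n v, W n *m v = col2 (expi (P n) * ip (xr n) v) (expi (Q n) * ip (xl n) v).
  move=> n v. rewrite /W [in LHS](col2E v) mx2col2 /ip. apply: col2_congr; ring.
have Wunit : forall n, unitary2 (W n).
  move=> n. have /onb2E [h11 h22 h12] := hx n.
  have h21 : ip (xl n) (xr n) = 0 by rewrite ipC h12 conjc0.
  have H : W n *m adj (W n) = 1%:M.
    rewrite /W adj_mx2 mx2M mx2_1 !conjM !conjcK. congr mx2.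
    - transitivity (expi (P n) * conjc (expi (P n)) * ip (xr n) (xr n)); first by rewrite /ip; ring.
      by rewrite expiJ h11 mulr1.
    - transitivity (expi (P n) * conjc (expi (Q n)) * ip (xr n) (xl n)); first by rewrite /ip; ring.
      by rewrite h12 mulr0.
    - transitivity (expi (Q n) * conjc (expi (P n)) * ip (xl n) (xr n)); first by rewrite /ip; ring.
      by rewrite h21 mulr0.
    - transitivity (expi (Q n) * conjc (expi (Q n)) * ip (xl n) (xl n)); first by rewrite /ip; ring.
      by rewrite expiJ h22 mulr1.
  split => //. exact: mulmx1C.
pose mu1 := tb0 - tbm. pose mu3 := tdp - lam - lam. pose mu2 := td0 + tbp - tb0 - lam - lam.
have Elam : expi lam * expi lam = expi tdm by rewrite expiM2.
have sqp := @sq_eq _ _ rbp0 hrp. have sq0 := @sq_eq _ _ rb00 hr0. have sqm := @sq_eq _ _ rbm0 hrm.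
have zlE : forall m, zeta_left rap ram ra0 mu1 m =
    col2 (ra m)%:C ((rb m)%:C * (expi (tb m) * conjc (expi (tbb m)))).
  move=> m. have -> : zeta_left rap ram ra0 mu1 m = reg m (rap%:C *: e1 + sq rap *: e2)
     (ra0%:C *: e1 + (expi mu1 * sq ra0) *: e2) (ram%:C *: e1 + sq ram *: e2) by [].
  rewrite e1E e2E !scale_col2 !add_col2 /tbb /ra /rb /tb.
  case: (int_cases m) => h.
  - have -> : (m == 0) = false by lia. rewrite !reg_pos // expiJ sqp. apply: col2_congr; ring.
  - rewrite h !reg_0 eqxx sq0 /mu1 expiB. apply: col2_congr; ring.
  - have -> : (m == 0) = false by lia. rewrite !reg_neg //.
    rewrite expiJ sqm. apply: col2_congr; ring.
pose F := fun m : int => conjc (expi lam) * conjc (expi lam) * expi (td m) * expi (tbb (m + 1)) * conjc (expi (tb m)).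
pose G := fun m : int => conjc (expi lam) * conjc (expi lam) * expi (td m) * expi (tbb (m + 1)) * conjc (expi (tbb m)).
have zrE : forall m, zeta_right rap ram ra0 mu1 mu2 mu3 m =
    col2 (- (F m * (rb m)%:C)) (G m * (ra m)%:C).
  move=> m. have -> : zeta_right rap ram ra0 mu1 mu2 mu3 m =
     reg m ((- (expi mu3 * sq rap)) *: e1 + (expi mu3 * rap%:C) *: e2)
      ((- (expi mu2 * sq ra0)) *: e1 + (expi (mu1 + mu2) * ra0%:C) *: e2)
      ((- sq ram) *: e1 + ram%:C *: e2) by [].
  rewrite e1E e2E !scale_col2 !add_col2 /F /G /tbb /ra /rb /tb /td.
  case: (int_cases m) => h.
  - have -> : (m == 0) = false by lia. have -> : (m + 1 == 0) = false by lia.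
    rewrite !reg_pos //; last by lia.
    rewrite sqp /mu3 !expiB. apply: col2_congr; efield.
  - rewrite h !reg_0 eqxx add0r. rewrite reg_pos // sq0 /mu2 /mu1 !expiB !expiD.
    have -> : ((1:int) == 0) = false by []. apply: col2_congr; efield.
  - have -> : (m == 0) = false by lia. rewrite !(reg_neg m _ _ _ h) sqm.
    have -> : (if m + 1 == 0 then tbm else reg (m + 1) tbp tb0 tbm) = tbm.
      case: ifP => // h'. rewrite reg_neg //. lia.
    rewrite -Elam. apply: col2_congr; efield.
move=> hPhi.
have hPhi1 : ip Phi Phi = 1 by apply: ipE.
have hpars := parseval (xr 0) (xl 0) Phi Phi (hx 0). rewrite hPhi1 in hpars.
have [tu htu] := polar (ip (xr 0) Phi). have [tv htv] := polar (ip (xl 0) Phi).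
have nu0 := nr_ge0 (ip (xr 0) Phi). have nv0 := nr_ge0 (ip (xl 0) Phi).
have hnu : nr (ip (xr 0) Phi) ^+ 2 + nr (ip (xl 0) Phi) ^+ 2 = 1.
  apply: realC_inj. rewrite rmorphD rmorph1 /= -!zJ hpars. ring.
move: (nr (ip (xr 0) Phi)) (nr (ip (xl 0) Phi)) htu htv nu0 nv0 hnu => nu nv htu htv nu0 nv0 hnu.
have squ := @sq_eq _ _ nv0 hnu.
exists rap, ram, ra0, nu, mu1, mu2, mu3, (Q 0 + tv - tu).
split; try (apply/andP; split; [done| nra]).
exists lam, (- tu), W. split; first exact: Wunit. split.
- move=> n m. rewrite HU /U_std.
  have /onb2E [h11 h22 h12] := hx n.
  have h21 : ip (xl n) (xr n) = 0 by rewrite ipC h12 conjc0.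
  case: (eqVneq m (n + 1)) => [->|h1].
    rewrite Wket !Wv. have [Ha Hb _ _] := Hip (n + 1). rewrite Ha Hb h11 h21 zlE e1E !ketbra2 scale_mx2.
    rewrite (PkeyE (n + 1)) (QE (n + 1)) addrK.
    apply: mx2_congr; rewrite ?(conjM, conjN, conjcK, conjC); efield.

  case: (eqVneq m (n - 1)) => [->|h2].
    rewrite Wket !Wv. have [_ _ Hc He] := Hip (n - 1). rewrite Hc He h12 h22 zrE e2E !ketbra2 scale_mx2.
    rewrite /F /G subrK (QE n) (QE' (n - 1)).
    apply: mx2_congr; rewrite ?(conjM, conjN, conjcK, conjC); efield.
  by rewrite mulmx0 mul0mx scaler0.
- rewrite Wv htu htv /Phi_at e1E e2E !scale_col2 add_col2 squ.
  have -> : P 0 = 0 by rewrite /P /= mul0r.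
  rewrite expi0 (expiB (Q 0 + tv) tu) (expiD (Q 0) tv). apply: col2_congr; efield.
Qed.
Lemma unitV (x : Cx) : x * conjc x = 1 -> conjc x = x^-1.
Proof.
move=> h. have hx : x != 0 by apply/negP=> /eqP h0; move: h; rewrite h0 mul0r => /eqP; rewrite eq_sym oner_eq0.
by apply: (mulfI hx); rewrite h divff.
Qed.
Lemma unit_neq0 (x : Cx) : x * conjc x = 1 -> x != 0.
Proof. move=> h. apply/negP=> /eqP h0; move: h; rewrite h0 mul0r => /eqP; by rewrite eq_sym oner_eq0. Qed.

Lemma realC_neq0 (r : R) : r != 0 -> r%:C != 0 :> Cx.
Proof. move=> hr. apply/eqP=> h. have := congr1 (@complex.Re _) h. move=> /= h'. by rewrite h' eqxx in hr. Qed.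
Lemma realC_mul (r s : R) : (r * s)%:C = r%:C * s%:C :> Cx.
Proof. by simpc. Qed.
Lemma realC_inv (r : R) : r != 0 -> (r^-1)%:C = (r%:C)^-1 :> Cx.
Proof. move=> hr. exact: fmorphV. Qed.

Lemma pos_unit (g : Cx) (r r' : R) : g * conjc g = 1 -> 0 < r -> 0 < r' ->
  g * r%:C = r'%:C -> g = 1 /\ r = r'.
Proof.
move=> hg hr hr' h.
have rz : r != 0 by rewrite gt_eqF.
have hgq : g = (r' / r)%:C.
  rewrite realC_mul realC_inv // -h. field. exact: realC_neq0.
have hq : ((r' / r * (r' / r))%:C : Cx) = 1.
  by rewrite realC_mul -{2}(conjC (r' / r)) -hgq.
have hq1 : r' / r * (r' / r) = 1 by apply: realC_inj; rewrite hq.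
have hq0 : 0 < r' / r by rewrite divr_gt0.
have q1 : r' / r = 1 by nra.
split; first by rewrite hgq q1.
have : r' = r' / r * r by field. by rewrite q1 mul1r.
Qed.

Lemma expi_inj (a b : R) : 0 <= a < 2 * PI -> 0 <= b < 2 * PI -> expi a = expi b -> a = b.
Proof.
move=> /andP [ha1 ha2] /andP [hb1 hb2] h.
have h1 : expi (a - b) = 1 by rewrite expiB -h expiJ.
have hc : cos (a - b) = 1 by move: h1; rewrite /expi => -[].
have hs : sin (a - b) = 0 by move: h1; rewrite /expi => -[].
have [k hk] := sin_eq_0_0 _ hs.
have hpi : 0 < PI by apply/RltP; exact: PI_RGT_0.
have hk' : a - b = IZR k * PI by exact: hk.
have two : (2%:R : R) = IZR 2 by rewrite -INRE INR_IZR_INZ.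
have m2 : (- (2%:R) : R) = IZR (-2) by rewrite two.
have hk1 : IZR k < 2%:R by nra.
have hk2 : Rlt (Ropp (IZR 2)) (IZR k) by apply/RltP; rewrite -two RoppE; nra.
rewrite two in hk1.
move/RltP/lt_IZR: hk1 => hk1. rewrite -opp_IZR in hk2. move/lt_IZR: hk2 => hk2.
have : (k = Z.neg xH \/ k = Z0 \/ k = Z.pos xH) by lia.
case=> [hk0|[hk0|hk0]]; rewrite hk0 in hk.
- have e : IZR (Z.neg xH) = - 1 by []. move: hc; rewrite hk RmultE e mulN1r cos_neg cos_PI => hh. exfalso. have : (-1 : R) = 1 by exact: hh. lra.
- by apply/eqP; rewrite -subr_eq0; apply/eqP; rewrite hk' hk0 mul0r.
- have e : IZR (Z.pos xH) = 1 by []. move: hc; rewrite hk RmultE e mul1r cos_PI => hh. exfalso. move: hh. Lra.lra.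
Qed.

Lemma col2_0 (a b : Cx) : col2 a b 0 0 = a. Proof. by rewrite mxE. Qed.
Lemma col2_1 (a b : Cx) : col2 a b 1 0 = b. Proof. by rewrite mxE. Qed.

Lemma zl0 rp rm r0 mu1 m : (zeta_left rp rm r0 mu1 m) 0 0 = (reg m rp r0 rm)%:C.
Proof. rewrite /zeta_left /reg e1E e2E; case: ifP => _; [|case: ifP => _]; rewrite !scale_col2 add_col2 col2_0; ring. Qed.
Lemma zl1 rp rm r0 mu1 m : (zeta_left rp rm r0 mu1 m) 1 0 = reg m (sq rp) (expi mu1 * sq r0) (sq rm).
Proof. rewrite /zeta_left /reg e1E e2E; case: ifP => _; [|case: ifP => _]; rewrite !scale_col2 add_col2 col2_1; ring. Qed.
Lemma zr0 rp rm r0 mu1 mu2 mu3 m : (zeta_right rp rm r0 mu1 mu2 mu3 m) 0 0 =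
  reg m (- (expi mu3 * sq rp)) (- (expi mu2 * sq r0)) (- sq rm).
Proof. rewrite /zeta_right /reg e1E e2E; case: ifP => _; [|case: ifP => _]; rewrite !scale_col2 add_col2 col2_0; ring. Qed.
Lemma zr1 rp rm r0 mu1 mu2 mu3 m : (zeta_right rp rm r0 mu1 mu2 mu3 m) 1 0 =
  reg m (expi mu3 * rp%:C) (expi (mu1 + mu2) * r0%:C) (rm%:C).
Proof. rewrite /zeta_right /reg e1E e2E; case: ifP => _; [|case: ifP => _]; rewrite !scale_col2 add_col2 col2_1; ring. Qed.

Lemma UL rp rm r0 mu1 mu2 mu3 n : U_std rp rm r0 mu1 mu2 mu3 n (n + 1) = ketbra e1 (zeta_left rp rm r0 mu1 (n + 1)).
Proof. by rewrite /U_std eqxx. Qed.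
Lemma UR rp rm r0 mu1 mu2 mu3 m : U_std rp rm r0 mu1 mu2 mu3 (m + 1) m = ketbra e2 (zeta_right rp rm r0 mu1 mu2 mu3 m).
Proof. rewrite /U_std. have -> : (m == m + 1 + 1) = false by lia. by rewrite addrK eqxx. Qed.

Lemma vec_neq0 (z : 'cV[Cx]_2) : (z 0 0 != 0) || (z 1 0 != 0) -> z != 0.
Proof. move=> h. apply/negP => /eqP hz. by move: h; rewrite hz !mxE eqxx. Qed.

Lemma killA (A B : 'M[Cx]_2) (E : Cx) (z z' : 'cV[Cx]_2) : E != 0 -> adj B *m B = 1%:M -> z != 0 ->
  E *: ketbra (A *m e1) (B *m z) = ketbra e1 z' -> A 1 0 = 0.
Proof.
move=> hE hB hz H. case: (eqVneq (A 1 0) 0) => // hA.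
move: H. rewrite [A in A *m _]mx2E [B *m z]col2E [z']col2E e1E mx2col2 !ketbra2 scale_mx2 => /mx2_inj [_ _ h1 h2]. 
have y0 : (B *m z) 0 0 = 0.
  move: h1; rewrite !mul0r mulr0 addr0 mulr1 => /eqP. rewrite !mulf_eq0 (negPf hE) (negPf hA) /= => /eqP h.
  by rewrite -[_ 0 0]conjcK h conjc0.
have y1 : (B *m z) 1 0 = 0.
  move: h2; rewrite !mul0r mulr0 addr0 mulr1 => /eqP. rewrite !mulf_eq0 (negPf hE) (negPf hA) /= => /eqP h.
  by rewrite -[_ 1 0]conjcK h conjc0.
have : B *m z = 0 by rewrite [B *m z]col2E y0 y1; apply/matrixP => i j; rewrite !mxE; case: ifP.
move=> h0. move/negP: hz; case. by rewrite -[z]mul1mx -hB -mulmxA h0 mulmx0.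
Qed.
Lemma killB (A B : 'M[Cx]_2) (E : Cx) (z z' : 'cV[Cx]_2) : E != 0 -> adj B *m B = 1%:M -> z != 0 ->
  E *: ketbra (A *m e2) (B *m z) = ketbra e2 z' -> A 0 1 = 0.
Proof.
move=> hE hB hz H. case: (eqVneq (A 0 1) 0) => // hA.
move: H. rewrite [A in A *m _]mx2E [B *m z]col2E [z']col2E e2E mx2col2 !ketbra2 scale_mx2 => /mx2_inj [h1 h2 _ _].
have y0 : (B *m z) 0 0 = 0.
  move: h1; rewrite !mul0r mulr0 add0r mulr1 => /eqP. rewrite !mulf_eq0 (negPf hE) (negPf hA) /= => /eqP h.
  by rewrite -[_ 0 0]conjcK h conjc0.
have y1 : (B *m z) 1 0 = 0.
  move: h2; rewrite !mul0r mulr0 add0r mulr1 => /eqP. rewrite !mulf_eq0 (negPf hE) (negPf hA) /= => /eqP h.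
  by rewrite -[_ 1 0]conjcK h conjc0.
have : B *m z = 0 by rewrite [B *m z]col2E y0 y1; apply/matrixP => i j; rewrite !mxE; case: ifP.
move=> h0. move/negP: hz; case. by rewrite -[z]mul1mx -hB -mulmxA h0 mulmx0.
Qed.

Lemma unitM (x y : Cx) : x * conjc x = 1 -> y * conjc y = 1 -> (x * y) * conjc (x * y) = 1.
Proof. move=> hx hy. rewrite conjM. transitivity ((x * conjc x) * (y * conjc y)); first ring. by rewrite hx hy mulr1. Qed.
Lemma unitJ (x : Cx) : x * conjc x = 1 -> conjc x * conjc (conjc x) = 1.
Proof. move=> h. by rewrite conjcK mulrC. Qed.
Lemma unit_eq (x y : Cx) : y * conjc y = 1 -> x * conjc y = 1 -> y = x.
Proof. move=> hy hx. transitivity (y * (x * conjc y)); first by rewrite hx mulr1. by rewrite mulrCA hy mulr1. Qed.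
Lemma step (g : Cx) (r r' : R) : g * conjc g = 1 -> 0 < r -> 0 < r' ->
  g * conjc (r%:C) = conjc (r'%:C) -> g = 1 /\ r = r'.
Proof. rewrite !conjC. exact: pos_unit. Qed.
Lemma sq_pos (r : R) : 0 < r < 1 -> 0 < Num.sqrt (1 - r ^+ 2).
Proof. case/andP=> h0 h1. rewrite sqrtr_gt0. nra. Qed.
Arguments unitM {x y}. Arguments unitJ {x}. Arguments unit_eq {x y}. Arguments step {g r r'}.
Lemma conj_sq (r : R) : conjc (sq r) = sq r.
Proof. by rewrite /sq conjC. Qed.
Lemma sq_neq0 (r : R) : 0 < r < 1 -> sq r != 0.
Proof. move=> h. rewrite /sq realC_neq0 // gt_eqF //. exact: sq_pos. Qed.
Lemma reg_gt0 n (a b c : R) : 0 < a -> 0 < b -> 0 < c -> 0 < reg n a b c.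
Proof. by rewrite /reg; case: ifP => _ //; case: ifP. Qed.
Lemma expiJ' a : conjc (expi a) * expi a = 1.
Proof. by rewrite mulrC expiJ. Qed.

Lemma uniqueness rp rm r0 alpha mu1 mu2 mu3 theta rp' rm' r0' alpha' mu1' mu2' mu3' theta' :
  0 < rp < 1 -> 0 < rm < 1 -> 0 < r0 < 1 -> 0 < alpha < 1 ->
  0 < rp' < 1 -> 0 < rm' < 1 -> 0 < r0' < 1 -> 0 < alpha' < 1 ->
  unitary_equiv (U_std rp rm r0 mu1 mu2 mu3) (Phi_at alpha theta)
                (U_std rp' rm' r0' mu1' mu2' mu3') (Phi_at alpha' theta') ->
  [/\ rp = rp', rm = rm', r0 = r0', alpha = alpha' &
      [/\ expi mu1 = expi mu1', expi mu2 = expi mu2', expi mu3 = expi mu3' & expi theta = expi theta']].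
Proof.
move=> hp hm h0 ha hp' hm' h0' ha'.
case=> lam [lam' [W [HW [HB HPhi]]]].
have hE : expi lam != 0 := expi_neq0 lam.
have pp : 0 < rp by case/andP: hp. have pm : 0 < rm by case/andP: hm. have p0 : 0 < r0 by case/andP: h0.
have HWa : forall k, adj (W k) *m W k = 1%:M by move=> k; case: (HW k).
have k10 : forall k, W k 1 0 = 0.
  move=> k. have := HB k (k + 1). rewrite !UL Wket. apply: killA => //.
  apply: vec_neq0. rewrite zl0 realC_neq0 //. by rewrite gt_eqF // reg_gt0.
have k01 : forall k, W k 0 1 = 0.
  move=> k. have e : k = (k - 1) + 1 by rewrite subrK.
  have := HB ((k - 1) + 1) (k - 1). rewrite !UR Wket -e. apply: killB => //.
  apply: vec_neq0. apply/orP; right. rewrite zr1 /reg. case: ifP => _; [|case: ifP => _]; by rewrite ?mulf_neq0 ?expi_neq0 ?realC_neq0 ?gt_eqF.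

have Wd : forall k, W k = mx2 (W k 0 0) 0 0 (W k 1 1).
  move=> k. by rewrite {1}[W k]mx2E k10 k01.
have uAB : forall k, W k 0 0 * conjc (W k 0 0) = 1 /\ W k 1 1 * conjc (W k 1 1) = 1.
  move=> k. case: (HW k) => h _. rewrite [W k]Wd adj_mx2 mx2M mx2_1 in h. case/mx2_inj: h => h1 _ _ h2.
  split; [rewrite -h1 | rewrite -h2]; rewrite conjc0; ring.
have HL : forall k m, m = k + 1 ->
  expi lam * W k 0 0 * conjc (W m 0 0) * conjc ((zeta_left rp rm r0 mu1 m) 0 0)
     = conjc ((zeta_left rp' rm' r0' mu1' m) 0 0) /\
  expi lam * W k 0 0 * conjc (W m 1 1) * conjc ((zeta_left rp rm r0 mu1 m) 1 0)
     = conjc ((zeta_left rp' rm' r0' mu1' m) 1 0).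
  move=> k m ->. have H := HB k (k + 1).
  rewrite !UL Wket (Wd k) (Wd (k + 1)) e1E [zeta_left rp rm r0 mu1 (k + 1)]col2E
    [zeta_left rp' rm' r0' mu1' (k + 1)]col2E !mx2col2 !ketbra2 scale_mx2 in H.
  case/mx2_inj: H => h1 h2 _ _.
  split; [rewrite -[RHS]mul1r -h1 | rewrite -[RHS]mul1r -h2]; rewrite !(conjM, rmorphD, conjc0); ring.
have HR : forall k m, k = m + 1 ->
  expi lam * W k 1 1 * conjc (W m 0 0) * conjc ((zeta_right rp rm r0 mu1 mu2 mu3 m) 0 0)
     = conjc ((zeta_right rp' rm' r0' mu1' mu2' mu3' m) 0 0).
  move=> k m ->. have H := HB (m + 1) m.
  rewrite !UR Wket (Wd m) (Wd (m + 1)) e2E [zeta_right rp rm r0 mu1 mu2 mu3 m]col2E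
    [zeta_right rp' rm' r0' mu1' mu2' mu3' m]col2E !mx2col2 !ketbra2 scale_mx2 in H.
  case/mx2_inj: H => _ _ h1 _.
  rewrite -[RHS]mul1r -h1; rewrite !(conjM, rmorphD, conjc0); ring.
have HP := HPhi.
rewrite /Phi_at e1E e2E !scale_col2 !add_col2 (Wd 0) mx2col2 scale_col2 in HP.
case/col2_inj: HP => P1 P2.
have pp' : 0 < rp' by case/andP: hp'. have pm' : 0 < rm' by case/andP: hm'. have p0' : 0 < r0' by case/andP: h0'.
set E := expi lam.
have uE : E * conjc E = 1 := expiJ lam.
have [Lm1a Lm1b] := HL (-2) (-1) erefl.
have [L0a L0b] := HL (-1) 0 erefl.
have [L1a L1b] := HL 0 1 erefl.
have [L2a L2b] := HL 1 2 erefl.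
have Rm2 := HR (-1) (-2) erefl.
have Rm1 := HR 0 (-1) erefl.
have R0 := HR 1 0 erefl.
have R1 := HR 2 1 erefl.
rewrite !zl0 !zl1 !reg_neg // in Lm1a Lm1b.
rewrite !zl0 !zl1 !reg_0 in L0a L0b.
rewrite !zl0 !zl1 !reg_pos // in L1a L1b L2a L2b.
rewrite !zr0 !reg_neg // in Rm2 Rm1.
rewrite !zr0 reg_0 in R0.
rewrite !zr0 !reg_pos // in R1.
have uA := fun k => (uAB k).1. have uB := fun k => (uAB k).2.
have [gm1 erm] := step (unitM (unitM uE (uA (-2))) (unitJ (uA (-1)))) pm pm' Lm1a. subst rm'.
rewrite /sq in Lm1b.
have [gm1b _] := step (unitM (unitM uE (uA (-2))) (unitJ (uB (-1)))) (sq_pos _ hm) (sq_pos _ hm) Lm1b.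
have [g0a er0] := step (unitM (unitM uE (uA (-1))) (unitJ (uA 0))) p0 p0' L0a. subst r0'.
have [g1a erp] := step (unitM (unitM uE (uA 0)) (unitJ (uA 1))) pp pp' L1a. subst rp'.
rewrite /sq in L1b L2b.
have [g1b _] := step (unitM (unitM uE (uA 0)) (unitJ (uB 1))) (sq_pos _ hp) (sq_pos _ hp) L1b.
have [g2a _] := step (unitM (unitM uE (uA 1)) (unitJ (uA 2))) pp pp L2a.
have [g2b _] := step (unitM (unitM uE (uA 1)) (unitJ (uB 2))) (sq_pos _ hp) (sq_pos _ hp) L2b.
have Am1 := unit_eq (uA (-1)) gm1. have Bm1 := unit_eq (uB (-1)) gm1b.
have A0 := unit_eq (uA 0) g0a. have A1 := unit_eq (uA 1) g1a. have B1 := unit_eq (uB 1) g1b.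
have A2 := unit_eq (uA 2) g2a. have B2 := unit_eq (uB 2) g2b.
have sm0 : conjc (- sq rm) != 0 by rewrite conjN conj_sq oppr_eq0 sq_neq0.
have EE : E * E = 1.
  apply: (mulIf sm0). rewrite mul1r.
  have -> : E * E * conjc (- sq rm) = E * W (-1) 1 1 * conjc (W (-2) 0 0) * conjc (- sq rm).
    rewrite Bm1. transitivity (E * E * (W (-2) 0 0 * conjc (W (-2) 0 0)) * conjc (- sq rm)); first by rewrite uA mulr1.
    ring.
  exact: Rm2.
have X : E * W 0 1 1 * conjc (W (-1) 0 0) = 1.
  apply: (mulIf sm0). by rewrite mul1r Rm1.
have Y : E * W (-1) 0 0 * conjc (W 0 1 1) = 1.
  have cX := congr1 (@conjc _) X. rewrite !conjM conjcK conjc1 in cX.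
  transitivity (E * E * (conjc E * conjc (W 0 1 1) * W (-1) 0 0)); last by rewrite cX mulr1 EE.
  transitivity (E * (E * conjc E) * W (-1) 0 0 * conjc (W 0 1 1)); first by rewrite uE mulr1.
  ring.
have s0n := sq_neq0 _ h0.
have e1 : expi mu1 = expi mu1'.
  rewrite !conjM !conj_sq Y mul1r in L0b.
  have := mulIf s0n L0b. move/(congr1 (@conjc _)). by rewrite !conjcK.
have e2 : expi mu2 = expi mu2'.
  have Z : E * W 1 1 1 * conjc (W 0 0 0) = 1.
    rewrite B1. transitivity (E * E * (W 0 0 0 * conjc (W 0 0 0))); first ring. by rewrite uA mulr1 EE.
  rewrite Z mul1r !conjN !conjM !conj_sq in R0.
  move/oppr_inj: R0 => R0. have := mulIf s0n R0. move/(congr1 (@conjc _)). by rewrite !conjcK.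
have e3 : expi mu3 = expi mu3'.
  have Z : E * W 2 1 1 * conjc (W 1 0 0) = 1.
    rewrite B2. transitivity (E * E * (W 1 0 0 * conjc (W 1 0 0))); first ring. by rewrite uA mulr1 EE.
  rewrite Z mul1r !conjN !conjM !conj_sq in R1.
  move/oppr_inj: R1 => R1. have := mulIf (sq_neq0 _ hp) R1. move/(congr1 (@conjc _)). by rewrite !conjcK.
have pa : 0 < alpha by case/andP: ha. have pa' : 0 < alpha' by case/andP: ha'.
have P1' : expi lam' * W 0 0 0 * conjc (alpha%:C) = conjc (alpha'%:C).
  rewrite !conjC. transitivity (alpha'%:C * 1 + expi theta' * sq alpha' * 0); last ring.
  rewrite -P1. ring.
have [gP ea] := step (unitM (expiJ lam') (uA 0)) pa pa' P1'. subst alpha'.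
have B0 : W 0 1 1 = W 0 0 0.
  apply: unit_eq (uB 0) _. by rewrite A0.
have e4 : expi theta = expi theta'.
  apply: (mulIf (sq_neq0 _ ha)).
  transitivity (expi lam' * W 0 0 0 * (expi theta * sq alpha)); first by rewrite gP mul1r.
  transitivity (alpha%:C * 0 + expi theta' * sq alpha * 1); last ring.
  rewrite -P2 -B0. ring.
by split.
Qed.
Theorem theorem3p2 :
  (forall (U : blockop) (Phi : 'cV[Cx]_2),
      two_phase_one_defect U -> unit_state Phi ->
      exists (rp rm r0 alpha mu1 mu2 mu3 theta : R),
        [/\ 0 <= rp <= 1, 0 <= rm <= 1, 0 <= r0 <= 1, 0 <= alpha <= 1 &
            unitary_equiv U Phi (U_std rp rm r0 mu1 mu2 mu3) (Phi_at alpha theta)])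
  /\
  (forall (rp rm r0 alpha mu1 mu2 mu3 theta
           rp' rm' r0' alpha' mu1' mu2' mu3' theta' : R),
      0 < rp < 1 -> 0 < rm < 1 -> 0 < r0 < 1 -> 0 < alpha < 1 ->
      0 < rp' < 1 -> 0 < rm' < 1 -> 0 < r0' < 1 -> 0 < alpha' < 1 ->
      0 <= mu1 < 2 * PI -> 0 <= mu2 < 2 * PI -> 0 <= mu3 < 2 * PI ->
      0 <= theta < 2 * PI ->
      0 <= mu1' < 2 * PI -> 0 <= mu2' < 2 * PI -> 0 <= mu3' < 2 * PI ->
      0 <= theta' < 2 * PI ->
      (unitary_equiv (U_std rp rm r0 mu1 mu2 mu3) (Phi_at alpha theta)
                     (U_std rp' rm' r0' mu1' mu2' mu3') (Phi_at alpha' theta')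
       <-> [/\ rp = rp', rm = rm', r0 = r0', alpha = alpha'
             & [/\ mu1 = mu1', mu2 = mu2', mu3 = mu3' & theta = theta']])).
Proof.
Proof.
split; first exact: existence.
move=> rp rm r0 alpha mu1 mu2 mu3 theta rp' rm' r0' alpha' mu1' mu2' mu3' theta'
  hp hm h0 ha hp' hm' h0' ha' b1 b2 b3 b4 b1' b2' b3' b4'.
split.
- move=> H. have [-> -> -> -> [e1 e2 e3 e4]] := @uniqueness rp rm r0 alpha mu1 mu2 mu3 theta rp' rm' r0' alpha' mu1' mu2' mu3' theta' hp hm h0 ha hp' hm' h0' ha' H.
  split => //. split; exact: expi_inj.
- case=> -> -> -> -> [-> -> -> ->].
  have adj1 : adj (1%:M : 'M[Cx]_2) = 1%:M by rewrite mx2_1 adj_mx2 conjc0 conjc1.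
  exists 0, 0, (fun _ => 1%:M). split.
    by move=> n; rewrite /unitary2 adj1 mul1mx.
  split.
    by move=> n m; rewrite expi0 scale1r adj1 mul1mx mulmx1.
  by rewrite expi0 scale1r mul1mx.
Qed.
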